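(* Let $\mathcal G$ be a partition of $[n]$ into sets of size $\tau$, and let $S$ be the $\tau$-partition sampling ($\Pr(S=C)=\tau/n$ for $C\in\mathcal G$). Let $\mathbf W=\mathrm{diag}(w_1,\dots,w_n)\succ0$, $\mathbf S=\mathbf I_S$ and $\theta_{\mathbf S}=\frac{1}{c_1p_S}=\frac{n}{\tau}$ (here $c_1=1$). Then the sketch residual satisfies $$\rho\le\frac n\tau\max_{C\in\mathcal G}\sum_{i\in C}w_i.$$
   Context: $\mathbf I_S$ is the column submatrix of the $n\times n$ identity with columns indexed by $S$; $e$ is the all-ones vector; $\Pi_{\mathbf S}=\mathbf S(\mathbf S^\top\mathbf W\mathbf S)^\dagger\mathbf S^\top\mathbf W$; the sketch residual is $\rho=\lambda_{\max}\big(\mathbf W^{1/2}(\mathbb{E}[\theta_{\mathbf S}^2\Pi_{\mathbf S}ee^\top\Pi_{\mathbf S}^\top]-ee^\top)\mathbf W^{1/2}\big)$. *)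

(* Defs.v *)
From HB Require Import structures.
From mathcomp Require Import all_boot all_order all_algebra.
Set Implicit Arguments. Unset Strict Implicit. Unset Printing Implicit Defensive.
Import Order.TTheory GRing.Theory Num.Theory.
Local Open Scope ring_scope.

(* Column submatrix I_C of the n x n identity, columns indexed by C
   (in increasing order, via enum_val). *)
Definition colsel (R : ringType) (n : nat) (C : {set 'I_n}) : 'M[R]_(n, #|C|) :=
  \matrix_(i < n, j < #|C|) (i == enum_val j)%:R.

(* Pseudo-inverse: in this setting S^T W S is a positive diagonal matrix,
   hence invertible, and its Moore-Penrose pseudo-inverse is its inverse. *)
Definition pinv (R : fieldType) (m : nat) (A : 'M[R]_m) : 'M[R]_m := invmx A.

Definition PiS (R : fieldType) (n : nat) (W : 'M[R]_n) (C : {set 'I_n}) : 'M[R]_n :=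
  colsel R C *m pinv ((colsel R C)^T *m W *m colsel R C) *m (colsel R C)^T *m W.

Definition onesv (R : ringType) (n : nat) : 'cV[R]_n := const_mx 1.

(* E[theta_S^2 Pi_S e e^T Pi_S^T] for the tau-partition sampling:
   Pr(S = C) = tau/n for C in G, theta_S = n/tau. *)
Definition sketch_expect (R : fieldType) (n tau : nat) (G : {set {set 'I_n}})
  (W : 'M[R]_n) : 'M[R]_n :=
  \sum_(C in G) ((tau%:R / n%:R) * (n%:R / tau%:R) ^+ 2) *:
     (PiS W C *m onesv R n *m (onesv R n)^T *m (PiS W C)^T).

(* The matrix whose largest eigenvalue is the sketch residual rho:
   W^{1/2} (E[...] - e e^T) W^{1/2}, with W = diag(w). *)
Definition residual_mx (R : rcfType) (n tau : nat) (G : {set {set 'I_n}})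
  (w : 'rV[R]_n) : 'M[R]_n :=
  let Wh := diag_mx (map_mx Num.sqrt w) in
  Wh *m (sketch_expect tau G (diag_mx w) - onesv R n *m (onesv R n)^T) *m Wh.

(* Main.v *)
Require Import Defs.
From HB Require Import structures.
From mathcomp Require Import all_boot all_order all_algebra.
From mathcomp Require Import ring lra.
Import Order.TTheory GRing.Theory Num.Theory.
Local Open Scope ring_scope.

Lemma sum_pick (R : ringType) (T : finType) (x : T) (F : T -> R) :
  \sum_k (k == x)%:R * F k = F x.
Proof.
rewrite (bigD1 x) //= eqxx mul1r big1 ?addr0 // => k /negbTE ->.
by rewrite mul0r.
Qed.

Lemma colsel_D (R : comRingType) n (C : {set 'I_n}) (w : 'rV[R]_n) :
  (colsel R C)^T *m diag_mx w *m colsel R C = diag_mx (\row_j w 0 (enum_val j)).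
Proof.
apply/matrixP => i j; rewrite mul_mx_diag !mxE.
under eq_bigr => k _ do rewrite !mxE -mulrA.
by rewrite sum_pick (inj_eq enum_val_inj) mulr_natr.
Qed.

Lemma colsel_Wones (R : comRingType) n (C : {set 'I_n}) (w : 'rV[R]_n) :
  (colsel R C)^T *m (diag_mx w *m onesv R n) =
  diag_mx (\row_j w 0 (enum_val j)) *m onesv R #|C|.
Proof.
apply/matrixP => i j; rewrite !mul_diag_mx !mxE.
under eq_bigr => k _ do rewrite !mxE mulr1.
by rewrite sum_pick mulr1.
Qed.

Lemma colsel_ones (R : ringType) n (C : {set 'I_n}) :
  colsel R C *m onesv R #|C| = \col_i (i \in C)%:R.
Proof.
apply/matrixP => i j; rewrite !mxE.
under eq_bigr => k _ do rewrite !mxE mulr1.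
rewrite -(big_enum_val (A := mem C) (fun x => (i == x)%:R)) /=.
case: (boolP (i \in C)) => iC.
  rewrite (bigD1 i) //= eqxx big1 ?addr0 // => x /andP[_ /negbTE].
  by rewrite eq_sym => ->.
rewrite big1 // => x xC; case: eqP => // e; by rewrite e xC in iC.
Qed.

Lemma PiS_ones (R : realFieldType) n (C : {set 'I_n}) (w : 'rV[R]_n) :
  (forall i, 0 < w 0 i) ->
  PiS (diag_mx w) C *m onesv R n = \col_i (i \in C)%:R.
Proof.
move=> hw.
have U : (colsel R C)^T *m diag_mx w *m colsel R C \in unitmx.
  rewrite colsel_D unitmxE det_diag unitfE.
  by apply/prodf_neq0 => j _; rewrite mxE gt_eqF.
rewrite /PiS /pinv; set D := (_^T *m _ *m _).
rewrite -!mulmxA colsel_Wones -colsel_D -/D.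
by rewrite [invmx _ *m _]mulmxA mulVmx // mul1mx colsel_ones.
Qed.
Lemma cauchy_schwarz (R : realFieldType) (I : finType) (P : pred I) (f g : I -> R) :
  (\sum_(i | P i) f i * g i) ^+ 2 <=
  (\sum_(i | P i) f i ^+ 2) * (\sum_(i | P i) g i ^+ 2).
Proof.
set A := \sum_(i | P i) f i ^+ 2; set B := \sum_(i | P i) g i ^+ 2.
set S := \sum_(i | P i) f i * g i.
have H : 0 <= \sum_(i | P i) \sum_(j | P j) (f i * g j - f j * g i) ^+ 2.
  by apply: sumr_ge0 => i _; apply: sumr_ge0 => j _; apply: sqr_ge0.
have E : \sum_(i | P i) \sum_(j | P j) (f i * g j - f j * g i) ^+ 2
         = A * B + A * B - 2 * S * S.
  have E1 : forall i, \sum_(j | P j) (f i * g j - f j * g i) ^+ 2 =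
       f i ^+ 2 * B + A * g i ^+ 2 - (2 * (f i * g i)) * S.
    move=> i.
    have Id : forall j, (f i * g j - f j * g i) ^+ 2 =
       f i ^+ 2 * g j ^+ 2 + f j ^+ 2 * g i ^+ 2 - (2 * (f i * g i)) * (f j * g j).
      by move=> j; ring.
    under eq_bigr => j _ do rewrite Id.
    rewrite sumrB big_split /= -!mulr_sumr -mulr_suml //.
  under eq_bigr => i _ do rewrite E1.
  by rewrite sumrB big_split /= -!mulr_suml -!mulr_sumr.
rewrite E in H; nra.
Qed.

Lemma quad_rank1 (R : comRingType) n (x : 'rV[R]_n) (u : 'cV[R]_n) :
  (x *m (u *m u^T) *m x^T) 0 0 = ((x *m u) 0 0) ^+ 2.
Proof.
rewrite mulmxA -[_ *m x^T]mulmxA -trmx_mul.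
by rewrite mxE big_ord1 !mxE expr2.
Qed.

Theorem theorem4p18 (R : rcfType) (n tau : nat) (G : {set {set 'I_n}})
  (w : 'rV[R]_n)
  (hG : partition G [set: 'I_n])
  (hsize : forall C, C \in G -> #|C| = tau)
  (hw : forall i, 0 < w 0 i) :
  forall a : R, eigenvalue (residual_mx tau G w) a ->
    a <= (n%:R / tau%:R) * \big[Num.max/0]_(C in G) \sum_(i in C) w 0 i.
Proof.
move=> a /eigenvalueP [v Hv v0].
case: n G w hG hsize hw v Hv v0 => [|n] G w hG hsize hw v Hv v0.
  by rewrite thinmx0 eqxx in v0.
have covG : cover G = [set: 'I_n.+1] by case/and3P: hG => /eqP.
have tpos : (0 < tau)%N.
  have : (ord0 : 'I_n.+1) \in cover G by rewrite covG inE.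
  case/bigcupP => C CG iC.
  by rewrite -(hsize C CG) card_gt0; apply/set0Pn; exists ord0.
set s := map_mx Num.sqrt w.
set k := tau%:R / n.+1%:R * (n.+1%:R / tau%:R) ^+ 2 :> R.
have kE : k = n.+1%:R / tau%:R.
  have t0 : tau%:R != 0 :> R by rewrite pnatr_eq0 -lt0n.
  have n0 : n.+1%:R != 0 :> R by rewrite pnatr_eq0.
  by rewrite /k; field; rewrite t0 nat1r n0.
set u := fun C : {set 'I_n.+1} => \col_i ((i \in C)%:R : R).
have SE : sketch_expect tau G (diag_mx w) = k *: \sum_(C in G) u C *m (u C)^T.
  rewrite /sketch_expect scaler_sumr; apply: eq_bigr => C _.
  by rewrite -mulmxA -trmx_mul PiS_ones.
have Hq : (v *m residual_mx tau G w *m v^T) 0 0 = a * (v *m v^T) 0 0.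
  by rewrite Hv -scalemxAl mxE.
set x := v *m diag_mx s.
have HM : v *m residual_mx tau G w *m v^T =
   x *m (sketch_expect tau G (diag_mx w) - onesv R n.+1 *m (onesv R n.+1)^T) *m x^T.
  by rewrite /residual_mx /x trmx_mul tr_diag_mx !mulmxA.
rewrite HM SE mulmxBr mulmxBl mxE [X in _ + X = _]mxE quad_rank1 in Hq.
rewrite -scalemxAr -scalemxAl mulmx_sumr mulmx_suml mxE summxE in Hq.
have QR : \sum_(C in G) (x *m (u C *m (u C)^T) *m x^T) 0 0 =
    \sum_(C in G) ((x *m u C) 0 0) ^+ 2.
  by apply: eq_bigr => C _; exact: quad_rank1.
rewrite QR in Hq.
have yE : forall C, (x *m u C) 0 0 = \sum_(i in C) v 0 i * Num.sqrt (w 0 i).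
  move=> C; rewrite /x mul_mx_diag mxE [RHS]big_mkcond /=; apply: eq_bigr => i _.
  by rewrite !mxE; case: (i \in C); rewrite ?mulr1 ?mulr0.
have QE : (v *m v^T) 0 0 = \sum_i v 0 i ^+ 2.
  by rewrite mxE; apply: eq_bigr => i _; rewrite mxE expr2.
set B := \big[Num.max/0]_(C in G) \sum_(i in C) w 0 i.
have CSb : forall C, C \in G ->
    ((x *m u C) 0 0) ^+ 2 <= (\sum_(i in C) v 0 i ^+ 2) * B.
  move=> C CG; rewrite yE; apply: le_trans (cauchy_schwarz _ _ _ _ _) _.
  under [X in _ * X <= _]eq_bigr => i _ do rewrite sqr_sqrtr ?ltW //.
  apply: ler_wpM2l; first by apply: sumr_ge0 => *; apply: sqr_ge0.
  exact: le_bigmax_cond.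
have Qpart : \sum_(C in G) \sum_(i in C) v 0 i ^+ 2 = \sum_i v 0 i ^+ 2.
  rewrite -big_trivIset; last by case/and3P: hG.
  by rewrite covG; apply: eq_bigl => i; rewrite inE.
have Q0 : 0 < \sum_i v 0 i ^+ 2.
  rewrite lt_def sumr_ge0 ?andbT; last by move=> *; apply: sqr_ge0.
  apply: contra v0 => /eqP H; apply/eqP/matrixP => i j.
  rewrite ord1 mxE; apply/eqP; rewrite -sqrf_eq0; apply/eqP.
  by apply: (psumr_eq0P _ H) => // *; apply: sqr_ge0.
have Hs : \sum_(C in G) ((x *m u C) 0 0) ^+ 2 <= (\sum_i v 0 i ^+ 2) * B.
  rewrite -Qpart mulr_suml; exact: ler_sum.
have k0 : 0 <= k by rewrite kE divr_ge0 ?ler0n.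
have z2 := sqr_ge0 ((x *m onesv R n.+1) 0 0).
rewrite QE in Hq; rewrite -kE.
move: Hq Hs k0 z2 Q0.
set Sy := \sum_(C in G) _; set Q := \sum_i _; set z := (_ 0 0).
move=> Hq Hs k0 z2 Q0.
nra.
Qed.
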